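(* There is a $17$-point code in $\mathrm{SO}(4)$ which is a regular simplex (all pairwise chordal distances between distinct points equal), is universally optimal, and has a symmetry group acting transitively on it. Moreover, there is no regular simplex in $\mathrm{SO}(4)$ with more than $17$ points.
   Context: $\mathrm{SO}(n)$ carries the chordal distance $d_c(U_1,U_2)=\|U_1-U_2\|_F$ (Frobenius norm), coming from the embedding $\mathrm{SO}(n)\subset\mathbb{R}^{n\times n}$. A code is a finite subset; a regular simplex is a code whose distinct points are pairwise equidistant. A function $g:(0,\infty)\to\mathbb{R}$ is completely monotonic if it is smooth and $(-1)^k g^{(k)}\ge 0$ for all $k\ge0$. A code $\mathcal{C}\subset \mathrm{SO}(n)$ is universally optimal if for every completely monotonic $g$ it minimizes the energy $\sum_{x\ne y\in\mathcal{C}} g(d_c(x,y)^2)$ among all codes in $\mathrm{SO}(n)$ of the same size. A symmetry of the code is an isometry of $\mathrm{SO}(4)$ (for $d_c$) mapping the code to itself. *)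

(* Defs.v *)
From HB Require Import structures.
From mathcomp Require Import all_boot all_order all_algebra.
From mathcomp Require Import all_classical all_reals all_analysis.
Set Implicit Arguments. Unset Strict Implicit. Unset Printing Implicit Defensive.
Import Order.TTheory GRing.Theory Num.Theory.
Local Open Scope ring_scope.

Section Defs.
Variable R : realType.

Definition inSO (n : nat) (U : 'M[R]_n) : Prop :=
  U^T *m U = 1%:M /\ \det U = 1.

Definition chordal2 (n : nat) (U V : 'M[R]_n) : R :=
  \sum_(i < n) \sum_(j < n) (U i j - V i j) ^+ 2.
Definition chordal (n : nat) (U V : 'M[R]_n) : R := Num.sqrt (chordal2 U V).

Definition is_code (n : nat) (C : seq 'M[R]_n) : Prop :=
  uniq C /\ forall x, x \in C -> inSO x.

Definition regular_simplex (n : nat) (C : seq 'M[R]_n) : Prop :=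
  exists c : R, forall x y, x \in C -> y \in C -> x != y -> chordal x y = c.

Definition completely_monotonic (g : R -> R) : Prop :=
  forall (k : nat) (x : R), 0 < x ->
    derivable (derive1n k g) x 1 /\ 0 <= (-1) ^+ k * derive1n k g x.

Definition energy (n : nat) (g : R -> R) (C : seq 'M[R]_n) : R :=
  \sum_(x <- C) \sum_(y <- C | x != y) g (chordal x y ^+ 2).

Definition universally_optimal (n : nat) (C : seq 'M[R]_n) : Prop :=
  forall g : R -> R, completely_monotonic g ->
  forall C' : seq 'M[R]_n, is_code C' -> size C' = size C ->
    energy g C <= energy g C'.

Definition isometry_SO (n : nat) (f : 'M[R]_n -> 'M[R]_n) : Prop :=
  (forall x, inSO x -> inSO (f x)) /\
  (forall x y, inSO x -> inSO y -> chordal (f x) (f y) = chordal x y) /\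
  (forall y, inSO y -> exists2 x, inSO x & f x = y).

Definition symmetry (n : nat) (C : seq 'M[R]_n) (f : 'M[R]_n -> 'M[R]_n) : Prop :=
  isometry_SO f /\ (forall x, x \in C -> f x \in C) /\ (forall y, y \in C -> exists2 x, x \in C & f x = y).

Definition transitive_symmetry (n : nat) (C : seq 'M[R]_n) : Prop :=
  forall x y, x \in C -> y \in C -> exists f, symmetry C f /\ f x = y.

End Defs.

(* Main.v *)
Require Import Defs.
From HB Require Import structures.
From mathcomp Require Import all_boot all_order all_algebra.
From mathcomp Require Import all_classical all_reals all_analysis.
From mathcomp Require Import ring lra zify.
From Stdlib Require Import Lia.
Import Order.TTheory GRing.Theory Num.Theory.
Import numFieldNormedType.Exports.
Local Open Scope classical_set_scope.
Local Open Scope ring_scope.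

Section Main.
Variable R : realType.

Lemma tangent_ineq (g : R -> R) : completely_monotonic g ->
  forall a x, 0 < a -> 0 < x -> g a + (derive1 g) a * (x - a) <= g x.
Proof.
move=> cm a x a0 x0.
have d0 (y : R) : 0 < y -> derivable g y 1 by move=> y0; exact: (cm 0%N y y0).1.
have d1 (y : R) : 0 < y -> derivable (derive1 g) y 1 by move=> y0; exact: (cm 1%N y y0).1.
have g2 (y : R) : 0 < y -> 0 <= derive1 (derive1 g) y.
  move=> y0; have := (cm 2%N y y0).2; rewrite expr2 mulrNN mul1r mul1r.
  done.
have cont (f : R -> R) (u v : R) : 0 < u -> (forall y : R, 0 < y -> derivable f y 1) ->
    {within [set` `[u, v]], continuous f}.
  move=> u0 df; apply: (@derivable_within_continuous R R f `[u, v]) => y; rewrite in_itv /= => /andP[uy _].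
  by apply: df; exact: lt_le_trans uy.
have mono (u v : R) : 0 < u -> u <= v -> (derive1 g) u <= (derive1 g) v.
  move=> u0 uv; apply: (@ger0_derive1_ndecr _ _ u v) => //.
  - by move=> y; rewrite in_itv /= => /andP[uy _]; apply: d1; exact: lt_trans uy.
  - by move=> y; rewrite in_itv /= => /andP[uy _]; apply: g2; exact: lt_trans uy.
  - exact: cont.
have isd (y : R) : 0 < y -> is_derive y 1 g ((derive1 g) y).
  by move=> y0; rewrite derive1E; apply: derivableP; exact: d0.
case: (ltgtP a x) => [ax|xa|<-]; last by rewrite subrr mulr0 addr0.
- have [c /andP[ac cx] E] : exists2 c, c \in `]a, x[ & g x - g a = (derive1 g) c * (x - a).
    apply: MVT => //; last exact: cont.
    by move=> y; rewrite in_itv /= => /andP[ay _]; apply: isd; exact: lt_trans ay.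
  rewrite -lerBrDl E; apply: ler_wpM2r; first by rewrite subr_ge0 ltW.
  by apply: mono => //; exact: ltW.
- have [c /andP[xc ca] E] : exists2 c, c \in `]x, a[ & g a - g x = (derive1 g) c * (a - x).
    apply: MVT => //; last exact: cont.
    by move=> y; rewrite in_itv /= => /andP[xy _]; apply: isd; exact: lt_trans xy.
  have : (derive1 g) c * (a - x) <= (derive1 g) a * (a - x).
    apply: ler_wpM2r; first by rewrite subr_ge0 ltW.
    by apply: mono; [exact: lt_trans xc | exact: ltW].
  rewrite -E => H.
  have -> : (derive1 g) a * (x - a) = - ((derive1 g) a * (a - x)) by rewrite -mulrN opprB.
  lra.
Qed.


Implicit Types x y z : 'M[R]_4.

Definition dot x y : R := \sum_(r < 4) \sum_(s < 4) x r s * y r s.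

Lemma chordal2_ge0 x y : 0 <= chordal2 x y.
Proof. by apply: sumr_ge0 => r _; apply: sumr_ge0 => s _; exact: sqr_ge0. Qed.

Lemma chordal_sq x y : chordal x y ^+ 2 = chordal2 x y.
Proof. by rewrite /chordal sqr_sqrtr // chordal2_ge0. Qed.

Lemma chordal2_eq0 x y : chordal2 x y = 0 -> x = y.
Proof.
move=> H; apply/matrixP => r s.
have h1 : forall r : 'I_4, \sum_(s < 4) (x r s - y r s) ^+ 2 = 0.
  move=> i; apply: (psumr_eq0P _ H) => // j _; apply: sumr_ge0 => k _; exact: sqr_ge0.
have h2 : (x r s - y r s) ^+ 2 = 0.
  by apply: (psumr_eq0P _ (h1 r)) => // j _; exact: sqr_ge0.
by move/eqP: h2; rewrite sqrf_eq0 subr_eq0 => /eqP.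
Qed.

Lemma chordal2_xx x : chordal2 x x = 0.
Proof. by apply: big1 => r _; apply: big1 => s _; rewrite subrr expr0n. Qed.

Lemma chordal2_dot x y : chordal2 x y = dot x x + dot y y - 2 * dot x y.
Proof.
rewrite /chordal2 /dot mulr_sumr -!big_split -sumrB /=; apply: eq_bigr => r _.
rewrite mulr_sumr -!big_split -sumrB /=; apply: eq_bigr => s _; ring.
Qed.

Lemma polar x y z : \sum_(r < 4) \sum_(s < 4) (x r s - z r s) * (y r s - z r s)
  = (chordal2 x z + chordal2 y z - chordal2 x y) / 2.
Proof.
rewrite /chordal2 -!big_split -sumrB mulr_suml /=; apply: eq_bigr => r _.
rewrite -!big_split -sumrB mulr_suml /=; apply: eq_bigr => s _; by field.
Qed.

Lemma dot_SO x : inSO x -> dot x x = 4.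
Proof.
case=> H _; rewrite /dot exchange_big /=.
transitivity (\sum_(s < 4) (1 : R)); last by rewrite sumr_const card_ord.
apply: eq_bigr => s _.
have := congr1 (fun M : 'M[R]_4 => M s s) H; rewrite !mxE eqxx /= => E; apply: etrans E; apply/esym.
by apply: eq_bigr => r _; rewrite mxE.
Qed.

Lemma sum_const_seq (T : Type) (C : seq T) (P : pred T) (c : R) :
  \sum_(y <- C | P y) c = c *+ count P C.
Proof. by rewrite big_const_seq iter_addr addr0. Qed.

Lemma count_neq (T : eqType) (C : seq T) a : uniq C -> a \in C ->
  count (fun y : T => a != y) C = (size C).-1.
Proof.
move=> uC aC; have := count_predC (fun y : T => a == y) C.
have -> : count (fun y : T => a == y) C = 1%N.
  have := count_uniq_mem a uC; rewrite aC => E; apply: etrans E.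
  by apply: eq_count => y /=; rewrite eq_sym.
have -> : count (predC (fun y : T => a == y)) C = count (fun y : T => a != y) C by [].
by move=> <-.
Qed.

Lemma pairs_const (T : eqType) (C : seq T) (c : R) : uniq C ->
  \sum_(a <- C) \sum_(y <- C | a != y) c = c *+ (size C).-1 *+ size C.
Proof.
move=> uC; rewrite big_seq (eq_bigr (fun _ => c *+ (size C).-1)).
  by rewrite -big_seq sum_const_seq count_predT.
by move=> a aC; rewrite sum_const_seq count_neq.
Qed.

Lemma sumsq_bound (C : seq 'M[R]_4) : (forall x, x \in C -> inSO x) ->
  \sum_(x <- C) \sum_(y <- C | x != y) chordal2 x y <= 8 * (size C)%:R ^+ 2.
Proof.
move=> HC.
have E : \sum_(x <- C) \sum_(y <- C | x != y) chordal2 x y =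
    \sum_(x <- C) \sum_(y <- C) (8 - 2 * dot x y).
  rewrite big_seq [RHS]big_seq; apply: eq_bigr => x xC.
  rewrite big_mkcond /= big_seq [RHS]big_seq; apply: eq_bigr => y yC.
  have [<-|nxy] := eqVneq x y.
    by rewrite /= (dot_SO _ (HC _ xC)); ring.
  by rewrite /= chordal2_dot (dot_SO _ (HC _ xC)) (dot_SO _ (HC _ yC)); ring.
have D : 0 <= \sum_(x <- C) \sum_(y <- C) dot x y.
  have -> : \sum_(x <- C) \sum_(y <- C) dot x y =
      \sum_(r < 4) \sum_(s < 4) (\sum_(x <- C) x r s) * (\sum_(y <- C) y r s).
    rewrite /dot.
    under eq_bigr => x _ do rewrite exchange_big /=.
    under eq_bigr => x _ do under eq_bigr => r _ do rewrite exchange_big /=.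
    rewrite exchange_big /=; apply: eq_bigr => r _.
    rewrite exchange_big /=; apply: eq_bigr => s _.
    rewrite mulr_suml; apply: eq_bigr => x _; by rewrite mulr_sumr.
  by apply: sumr_ge0 => r _; apply: sumr_ge0 => s _; rewrite -expr2 sqr_ge0.
rewrite E.
have -> : \sum_(x <- C) \sum_(y <- C) (8 - 2 * dot x y) =
   8 * (size C)%:R ^+ 2 - 2 * \sum_(x <- C) \sum_(y <- C) dot x y.
  rewrite (eq_bigr (fun x => 8 *+ size C - 2 * \sum_(y <- C) dot x y)); last first.
    by move=> x _; rewrite sumrB sum_const_seq count_predT -mulr_sumr.
  rewrite sumrB sum_const_seq count_predT -mulr_sumr -mulrnA.
  by rewrite -[8 *+ _]mulr_natr natrM expr2.
lra.
Qed.



Lemma mxvec_dot (A B : 'M[R]_4) :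
  \sum_(k < 4 * 4) mxvec A 0 k * mxvec B 0 k = \sum_(r < 4) \sum_(s < 4) A r s * B r s.
Proof.
rewrite (reindex (uncurry (@mxvec_index 4 4))); last exact: curry_mxvec_bij.
rewrite pair_big /=; apply: eq_bigr => [[r s]] _ /=.
by rewrite !mxvecE.
Qed.

Definition Jm : 'M[R]_17 := const_mx 1.

Lemma JJ : Jm *m Jm = 17%:R *: Jm.
Proof.
apply/matrixP => i j; rewrite !mxE (eq_bigr (fun _ => 1)).
  by rewrite sumr_const card_ord mulr1.
by move=> k _; rewrite !mxE mulr1.
Qed.

Lemma K_inv : (1%:M + Jm) *m (1%:M - 18%:R^-1 *: Jm) = 1%:M.
Proof.
rewrite mulmxDl !mulmxBr !mul1mx mulmx1 -scalemxAr JJ scalerA.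
apply/matrixP => i j; rewrite !mxE.
have h : (18%:R : R) != 0 by rewrite pnatr_eq0.
by field.
Qed.

Lemma simplex_le17 (C : seq 'M[R]_4) : is_code C -> regular_simplex C -> (size C <= 17)%N.
Proof.
case=> uC HC [c Hc].
rewrite leqNgt; apply/negP => big.
pose x := fun i : nat => nth 0 C i.
have xin i : (i < 18)%N -> x i \in C.
  by move=> hi; apply: mem_nth; exact: leq_trans hi big.
have xne i j : (i < 18)%N -> (j < 18)%N -> i <> j -> x i != x j.
  move=> hi hj nij; rewrite /x nth_uniq //; first by apply/eqP.
    exact: leq_trans hi big.
  exact: leq_trans hj big.
have d2 i j : (i < 18)%N -> (j < 18)%N -> i <> j -> chordal2 (x i) (x j) = c ^+ 2.
  by move=> hi hj nij; rewrite -chordal_sq Hc //; [exact: xin | exact: xin | exact: xne].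
have d0 : c ^+ 2 != 0.
  apply/eqP => h; have n01 : (0 <> 1)%N by [].
  have := d2 0%N 1%N isT isT n01; rewrite h => /chordal2_eq0 e.
  by move: (xne 0%N 1%N isT isT n01); rewrite e eqxx.
pose V : 'M[R]_(17, 4 * 4) := \matrix_(i < 17) mxvec (x i.+1 - x 0%N).
have G : V *m V^T = (c ^+ 2 / 2) *: (1%:M + Jm).
  apply/matrixP => i j; have hi := ltn_ord i; have hj := ltn_ord j; rewrite !mxE.
  rewrite (eq_bigr (fun k => mxvec (x i.+1 - x 0%N) 0 k * mxvec (x j.+1 - x 0%N) 0 k));
    last by move=> k _; rewrite !mxE.
  rewrite mxvec_dot.
  rewrite (eq_bigr (fun r => \sum_(s < 4) (x i.+1 r s - x 0%N r s) * (x j.+1 r s - x 0%N r s)));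
    last by move=> r _; apply: eq_bigr => s _; rewrite !mxE.
  rewrite polar (d2 i.+1 0%N) ?(d2 j.+1 0%N) //; try lia.
  have [->|nij] := eqVneq i j.
    by rewrite chordal2_xx /=; field.
  rewrite d2 /=; [by field | lia | lia | ].
  by move=> [e]; move/eqP: nij; apply; apply: val_inj.
have U : (V *m V^T) *m ((c ^+ 2 / 2)^-1 *: (1%:M - 18%:R^-1 *: Jm)) = 1%:M.
  rewrite G -scalemxAr -scalemxAl K_inv scalerA mulVf ?scale1r //.
  by rewrite mulf_neq0 // invr_eq0 pnatr_eq0.
have [uG _] := mulmx1_unit U.
have r1 := mxrank_unit uG; have r2 := mxrankM_maxl V V^T; have r3 := rank_leq_col V.
by move: (leq_trans r2 r3); rewrite r1.
Qed.



Lemma opt_from (C : seq 'M[R]_4) : uniq C -> size C = 17%N ->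
  (forall x y, x \in C -> y \in C -> x != y -> chordal2 x y = 17%:R / 2) ->
  universally_optimal C.
Proof.
move=> uC sC dC g cm C' [uC' HC'] sC'.
set a : R := 17%:R / 2.
have a0 : 0 < a by rewrite /a divr_gt0 // ltr0n.
have gp : derive1 g a <= 0.
  by have := (cm 1%N a a0).2; rewrite expr1 mulN1r oppr_ge0.
have EC : energy g C = g a *+ (size C).-1 *+ size C.
  rewrite /energy -pairs_const // big_seq [RHS]big_seq; apply: eq_bigr => x xC.
  rewrite big_seq_cond [RHS]big_seq_cond; apply: eq_bigr => y /andP[yC nxy].
  by rewrite chordal_sq dC.
have L : \sum_(x <- C') \sum_(y <- C' | x != y) (g a + derive1 g a * (chordal2 x y - a))
    <= energy g C'.
  apply: ler_sum => x _; apply: ler_sum => y nxy.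
  rewrite chordal_sq; apply: tangent_ineq => //.
  rewrite lt_def chordal2_ge0 andbT; apply/eqP => /chordal2_eq0 e.
  by rewrite e eqxx in nxy.
have S := @sumsq_bound C' HC'.
rewrite sC' sC in S.
have E2 : \sum_(x <- C') \sum_(y <- C' | x != y) (g a + derive1 g a * (chordal2 x y - a))
   = (g a - derive1 g a * a) *+ (size C').-1 *+ size C' +
     derive1 g a * \sum_(x <- C') \sum_(y <- C' | x != y) chordal2 x y.
  rewrite -pairs_const // mulr_sumr -big_split /=; apply: eq_bigr => x _.
  rewrite mulr_sumr -big_split /=; apply: eq_bigr => y _; ring.
rewrite E2 sC' sC in L; rewrite EC sC.
set T := \sum_(x <- C') \sum_(y <- C' | x != y) chordal2 x y in L S.
have M := ler_wnM2l gp S; rewrite /= in M.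
have key : (g a - derive1 g a * a) *+ 17.-1 *+ 17 + derive1 g a * (8 * 17%:R ^+ 2) =
    g a *+ 17.-1 *+ 17.
  rewrite -!mulrnA -[(g a - _) *+ _]mulr_natr -[g a *+ _]mulr_natr /a natrM /=. set A := g _. set B := derive1 g _. lra.
apply: le_trans L; rewrite -key lerD2l; exact: M.
Qed.


Section Trig.
Variable h : R.
Let c (n : nat) := cos (n%:R * h).
Let s (n : nat) := sin (n%:R * h).

Lemma pc (a b : nat) : (b <= a)%N -> c a * c b = (c (a + b) + c (a - b)) / 2.
Proof.
move=> ba; rewrite /c natrD natrB // [(_ - _) * h]mulrBl [(_ + _) * h]mulrDl cosD cosB; by field.
Qed.

Lemma sc (a : nat) : (1 <= a)%N -> 2 * s 1 * c a = s (a + 1) - s (a - 1).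
Proof.
move=> ba; rewrite /c /s natrD natrB // [(_ - _) * h]mulrBl [(_ + _) * h]mulrDl sinD sinB mul1r; ring.
Qed.

Lemma trig_main : sin (17 * h) = 0 -> sin h != 0 ->
  (cos (4 * (2 * h)) + cos (5 * (2 * h))) * (cos (2 * h) + cos (3 * (2 * h))) = - (1 / 4).
Proof.
move=> s17 s1.
have -> : 4 * (2 * h) = 8%:R * h by ring.
have -> : 5 * (2 * h) = 10%:R * h by ring.
have -> : 3 * (2 * h) = 6%:R * h by ring.
have e17 : s 17 = 0 by rewrite /s -s17; congr sin; ring.
have e1 : s 1 != 0 by rewrite /s mul1r.
rewrite -/(c 8) -/(c 10) -/(c 2) -/(c 6).
have p1 : c 8 * c 2 = (c 10 + c 6) / 2 := pc 8 2 isT.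
have p2 : c 8 * c 6 = (c 14 + c 2) / 2 := pc 8 6 isT.
have p3 : c 10 * c 2 = (c 12 + c 8) / 2 := pc 10 2 isT.
have p4 : c 10 * c 6 = (c 16 + c 4) / 2 := pc 10 6 isT.
have q2 : 2 * s 1 * c 2 = s 3 - s 1 := sc 2 isT.
have q4 : 2 * s 1 * c 4 = s 5 - s 3 := sc 4 isT.
have q6 : 2 * s 1 * c 6 = s 7 - s 5 := sc 6 isT.
have q8 : 2 * s 1 * c 8 = s 9 - s 7 := sc 8 isT.
have q10 : 2 * s 1 * c 10 = s 11 - s 9 := sc 10 isT.
have q12 : 2 * s 1 * c 12 = s 13 - s 11 := sc 12 isT.
have q14 : 2 * s 1 * c 14 = s 15 - s 13 := sc 14 isT.
have q16 : 2 * s 1 * c 16 = s 17 - s 15 := sc 16 isT.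
apply: (mulfI e1).
have -> : (c 8 + c 10) * (c 2 + c 6) = c 8 * c 2 + c 8 * c 6 + c 10 * c 2 + c 10 * c 6 by ring.
rewrite p1 p2 p3 p4.
have -> : s 1 * ((c 10 + c 6) / 2 + (c 14 + c 2) / 2 + (c 12 + c 8) / 2 + (c 16 + c 4) / 2) =
  (2 * s 1 * c 2 + 2 * s 1 * c 4 + 2 * s 1 * c 6 + 2 * s 1 * c 8 + 2 * s 1 * c 10 +
   2 * s 1 * c 12 + 2 * s 1 * c 14 + 2 * s 1 * c 16) / 4 by field.
rewrite q2 q4 q6 q8 q10 q12 q14 q16 e17; by field.
Qed.
End Trig.


Definition rot1 (u v : R) : 'M[R]_4 := \matrix_(i < 4, j < 4)
  match (i : nat), (j : nat) with
  | 0, 0 => cos u | 0, 1 => - sin u | 1, 0 => sin u | 1, 1 => cos u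
  | 2, 2 => cos v | 2, 3 => - sin v | 3, 2 => sin v | 3, 3 => cos v
  | _, _ => 0 end.

Definition rot2 (u v : R) : 'M[R]_4 := \matrix_(i < 4, j < 4)
  match (i : nat), (j : nat) with
  | 0, 0 => cos u | 0, 2 => - sin u | 2, 0 => sin u | 2, 2 => cos u
  | 1, 1 => cos v | 1, 3 => - sin v | 3, 1 => sin v | 3, 3 => cos v
  | _, _ => 0 end.

Ltac entries := apply/matrixP;
  case=> [[|[|[|[|?]]]] ?] //; case=> [[|[|[|[|?]]]] ?] //;
  rewrite !mxE ?big_ord_recl ?big_ord0 /= ?mxE /=.

Lemma rot1M u v u' v' : rot1 u v *m rot1 u' v' = rot1 (u + u') (v + v').
Proof. entries; rewrite ?cosD ?sinD; ring. Qed.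

Lemma rot2M u v u' v' : rot2 u v *m rot2 u' v' = rot2 (u + u') (v + v').
Proof. entries; rewrite ?cosD ?sinD; ring. Qed.

Lemma rot1T u v : (rot1 u v)^T = rot1 (- u) (- v).
Proof. entries; rewrite ?cosN ?sinN; ring. Qed.

Lemma rot2T u v : (rot2 u v)^T = rot2 (- u) (- v).
Proof. entries; rewrite ?cosN ?sinN; ring. Qed.

Lemma rot10 : rot1 0 0 = 1%:M.
Proof. entries; rewrite ?cos0 ?sin0; ring. Qed.

Lemma rot20 : rot2 0 0 = 1%:M.
Proof. entries; rewrite ?cos0 ?sin0; ring. Qed.

Lemma tr12 (u v w t : R) : \tr (rot1 u v *m rot2 w t) = (cos u + cos v) * (cos w + cos t).
Proof.
rewrite /mxtrace !big_ord_recl big_ord0 /= !mxE !big_ord_recl !big_ord0 /= !mxE /=.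
ring.
Qed.

Lemma SOM (A B : 'M[R]_4) : inSO A -> inSO B -> inSO (A *m B).
Proof.
move=> [HA dA] [HB dB]; split; last by rewrite det_mulmx dA dB mulr1.
by rewrite trmx_mul mulmxA -(mulmxA B^T) HA mulmx1 HB.
Qed.

Lemma det_orth (A : 'M[R]_4) : A^T *m A = 1%:M -> \det A * \det A = 1.
Proof. by move=> H; rewrite -{1}det_tr -det_mulmx H det1. Qed.

Lemma rot1SO u v : inSO (rot1 u v).
Proof.
split; first by rewrite rot1T rot1M !addNr rot10.
have -> : rot1 u v = rot1 (u / 2) (v / 2) *m rot1 (u / 2) (v / 2) by rewrite rot1M -!splitr.
rewrite det_mulmx det_orth // rot1T rot1M !addNr rot10 //.
Qed.

Lemma rot2SO u v : inSO (rot2 u v).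
Proof.
split; first by rewrite rot2T rot2M !addNr rot20.
have -> : rot2 u v = rot2 (u / 2) (v / 2) *m rot2 (u / 2) (v / 2) by rewrite rot2M -!splitr.
rewrite det_mulmx det_orth // rot2T rot2M !addNr rot20 //.
Qed.

Definition P (r : R) : 'M[R]_4 := rot1 (4 * r) (5 * r) *m rot2 r (3 * r).

Lemma PSO r : inSO (P r).
Proof. exact: SOM (rot1SO _ _) (rot2SO _ _). Qed.

Lemma dot_tr x y : dot x y = \tr (x^T *m y).
Proof.
rewrite /dot /mxtrace exchange_big /=; apply: eq_bigr => s _.
by rewrite mxE; apply: eq_bigr => r _; rewrite mxE.
Qed.

Lemma dotP r1 r2 : dot (P r1) (P r2) =
  (cos (4 * (r2 - r1)) + cos (5 * (r2 - r1))) * (cos (r2 - r1) + cos (3 * (r2 - r1))).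
Proof.
rewrite dot_tr /P trmx_mul rot1T rot2T.
rewrite -mulmxA (mulmxA (rot1 _ _)) rot1M mxtrace_mulC -!mulmxA rot2M tr12.
by congr (( cos _ + cos _) * (cos _ + cos _)); ring.
Qed.


End Main.

Arguments P {R}.
Arguments dot {R}.
Arguments rot1 {R}.
Arguments rot2 {R}.
Arguments dotP {R}.
Arguments dot_SO {R}.
Arguments PSO {R}.
Arguments trig_main {R}.
Arguments chordal2_dot {R}.
Arguments rot1SO {R}.
Arguments rot2SO {R}.
Arguments SOM {R}.
Arguments rot1M {R}.
Arguments rot2M {R}.
Arguments rot1T {R}.
Arguments rot2T {R}.
Arguments rot10 {R}.
Arguments rot20 {R}.
Arguments dot_tr {R}.
Arguments chordal2_eq0 {R}.
Arguments chordal2_xx {R}.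
Arguments chordal_sq {R}.
Arguments chordal2_ge0 {R}.
Arguments opt_from {R}.
Arguments simplex_le17 {R}.

Section Code.
Variable R : realType.
Set Printing Width 200.

Definition h0 : R := pi / 17.
Definition ang (k : nat) : R := k%:R * (2 * h0).
Definition pt (k : nat) : 'M[R]_4 := P (ang k).
Definition code : seq 'M[R]_4 := map pt (iota 0 17).

Lemma sin_mpi (m : nat) : sin (m%:R * pi) = 0 :> R.
Proof.
have := alternatingn (@sinDpi R) m 0; rewrite add0r sin0 mulr0 => <-.
by rewrite mulr_natl.
Qed.

Lemma sin_pos (m : nat) : (0 < m)%N -> (m < 17)%N -> sin (m%:R * h0) != 0.
Proof.
move=> m0 m17; apply: lt0r_neq0; apply: sin_gt0_pi; apply/andP; split.
  by rewrite /h0 mulr_gt0 ?ltr0n // divr_gt0 ?ltr0n // pi_gt0.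
have hm : (m%:R : R) <= 16 by rewrite (_ : 16 = 16%:R :> R) // ler_nat; lia.
have hp := @pi_gt0 R.
rewrite /h0; nra.
Qed.

Lemma dot_sym (x y : 'M[R]_4) : dot x y = dot y x.
Proof. by apply: eq_bigr => r _; apply: eq_bigr => s _; rewrite mulrC. Qed.

Lemma dot_pts j k : (j < k)%N -> (k < 17)%N -> dot (pt j) (pt k) = - (1 / 4).
Proof.
move=> jk k17; rewrite /pt dotP.
have -> : ang k - ang j = 2 * ((k - j)%:R * h0) by rewrite /ang (natrB _ (ltnW jk)); ring.
apply: trig_main; last by apply: sin_pos; lia.
rewrite (_ : 17 * ((k - j)%:R * h0) = (k - j)%:R * pi) ?sin_mpi //.
by rewrite /h0; field.
Qed.

Lemma dot_self k : dot (pt k) (pt k) = 4.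
Proof. exact: dot_SO (PSO _). Qed.

Lemma chord_pts j k : (j < 17)%N -> (k < 17)%N -> j != k -> chordal2 (pt j) (pt k) = 17%:R / 2.
Proof.
move=> j17 k17 njk; rewrite chordal2_dot !dot_self.
case: (ltngtP j k) => [jk|kj|e]; last by rewrite e eqxx in njk.
  by rewrite dot_pts //; field.
by rewrite dot_sym dot_pts //; field.
Qed.

Lemma per_c (u : R) (n : nat) : cos (u + n%:R * (2 * pi)) = cos u.
Proof.
have -> : n%:R * (2 * pi) = pi *+ 2 *+ n :> R by rewrite -mulrnA -[pi *+ (2 * n)]mulr_natl natrM; ring.
exact: (periodicn (@cosD2pi R) n u).
Qed.

Lemma per_s (u : R) (n : nat) : sin (u + n%:R * (2 * pi)) = sin u.
Proof.
have -> : n%:R * (2 * pi) = pi *+ 2 *+ n :> R by rewrite -mulrnA -[pi *+ (2 * n)]mulr_natl natrM; ring.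
exact: (periodicn (@sinD2pi R) n u).
Qed.

Lemma P_per (r : R) (q : nat) : P (r + q%:R * (2 * pi)) = P r.
Proof.
rewrite /P.
rewrite (_ : 4 * (r + q%:R * (2 * pi)) = 4 * r + (4 * q)%:R * (2 * pi)); last by rewrite natrM; ring.
rewrite (_ : 5 * (r + q%:R * (2 * pi)) = 5 * r + (5 * q)%:R * (2 * pi)); last by rewrite natrM; ring.
rewrite (_ : 3 * (r + q%:R * (2 * pi)) = 3 * r + (3 * q)%:R * (2 * pi)); last by rewrite natrM; ring.
by rewrite /rot1 /rot2 !per_c !per_s.
Qed.

Lemma pt_mod k : pt k = pt (k %% 17).
Proof.
rewrite {1}(divn_eq k 17) /pt /ang natrD natrM.
have -> : ((k %/ 17)%:R * 17%:R + (k %% 17)%:R) * (2 * h0) =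
   (k %% 17)%:R * (2 * h0) + (k %/ 17)%:R * (2 * pi) :> R by rewrite /h0; field.
exact: P_per.
Qed.


Definition A1 (n : nat) : 'M[R]_4 := rot1 (4 * ang n) (5 * ang n).
Definition B1 (n : nat) : 'M[R]_4 := rot2 (ang n) (3 * ang n).
Definition fsym (n : nat) (x : 'M[R]_4) : 'M[R]_4 := A1 n *m x *m B1 n.

Lemma fsym_pt n k : fsym n (pt k) = pt ((k + n) %% 17).
Proof.
rewrite -pt_mod /fsym /A1 /B1 /pt /P mulmxA rot1M -mulmxA rot2M.
by congr (rot1 _ _ *m rot2 _ _); rewrite /ang natrD; ring.
Qed.

Lemma A1TA n : (A1 n)^T *m A1 n = 1%:M.
Proof. by rewrite /A1 rot1T rot1M !addNr rot10. Qed.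
Lemma A1AT n : A1 n *m (A1 n)^T = 1%:M.
Proof. by rewrite /A1 rot1T rot1M !addrN rot10. Qed.
Lemma B1TB n : (B1 n)^T *m B1 n = 1%:M.
Proof. by rewrite /B1 rot2T rot2M !addNr rot20. Qed.
Lemma B1BT n : B1 n *m (B1 n)^T = 1%:M.
Proof. by rewrite /B1 rot2T rot2M !addrN rot20. Qed.

Lemma dot_fsym n (x y : 'M[R]_4) : dot (fsym n x) (fsym n y) = dot x y.
Proof.
rewrite !dot_tr /fsym !trmx_mul.
rewrite -!mulmxA (mulmxA (A1 n)^T) A1TA mul1mx.
by rewrite mxtrace_mulC -!mulmxA B1BT mulmx1.
Qed.

Lemma fsym_iso n : isometry_SO (fsym n).
Proof.
split; [|split].
- by move=> x Hx; apply: SOM; [apply: SOM => //; exact: rot1SO | exact: rot2SO].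
- by move=> x y _ _; rewrite /chordal !chordal2_dot !dot_fsym.
- move=> y Hy; exists ((A1 n)^T *m y *m (B1 n)^T).
    apply: SOM; [apply: SOM => // |].
      by rewrite /A1 rot1T; exact: rot1SO.
    by rewrite /B1 rot2T; exact: rot2SO.
  rewrite /fsym !mulmxA A1AT mul1mx -mulmxA B1TB mulmx1 //.
Qed.

Lemma in_code x : x \in code -> exists2 k, (k < 17)%N & x = pt k.
Proof. by case/mapP => k; rewrite mem_iota add0n => /andP[_ k17] ->; exists k. Qed.

Lemma pt_in k : (k < 17)%N -> pt k \in code.
Proof. by move=> k17; apply: map_f; rewrite mem_iota. Qed.

Lemma fsym_sym n : symmetry code (fsym n).
Proof.
split; first exact: fsym_iso.
split.
  by move=> x /in_code [k k17 ->]; rewrite fsym_pt; apply: pt_in; rewrite ltn_pmod.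
move=> y /in_code [k k17 ->].
exists (pt ((k + (17 - n %% 17)) %% 17)); first by apply: pt_in; rewrite ltn_pmod.
rewrite fsym_pt; congr pt; clear -k17; lia.
Qed.

Lemma code_trans : transitive_symmetry code.
Proof.
move=> x y /in_code [i i17 ->] /in_code [j j17 ->].
exists (fsym (j + (17 - i))); split; first exact: fsym_sym.
rewrite fsym_pt; congr pt; clear -i17 j17; lia.
Qed.

Lemma code_uniq : uniq code.
Proof.
rewrite map_inj_in_uniq ?iota_uniq // => j k.
rewrite !mem_iota !add0n => /andP[_ j17] /andP[_ k17] e.
apply/eqP; apply: contraT => njk.
have := chord_pts j k j17 k17 njk; rewrite e chordal2_xx => /esym/eqP.
by rewrite mulf_eq0 invr_eq0 !pnatr_eq0.
Qed.

Lemma code_SO x : x \in code -> inSO x.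
Proof. by case/in_code => k _ ->; exact: PSO. Qed.

Lemma code_dist x y : x \in code -> y \in code -> x != y -> chordal2 x y = 17%:R / 2.
Proof.
move=> /in_code [j j17 ->] /in_code [k k17 ->] nxy.
apply: chord_pts => //; apply: contraNneq nxy => ->; done.
Qed.

End Code.

Theorem theorem8p1 (R : realType) :
  (exists C : seq 'M[R]_4,
      [/\ is_code C, size C = 17%N, regular_simplex C,
          universally_optimal C & transitive_symmetry C]) /\
  (forall C : seq 'M[R]_4, is_code C -> regular_simplex C -> (size C <= 17)%N).
Proof.
split; last by move=> C; exact: simplex_le17.
exists (code R); split.
- by split; [exact: code_uniq | exact: code_SO].
- by rewrite size_map size_iota.
- exists (Num.sqrt (17%:R / 2)) => x y xC yC nxy.
  by rewrite /chordal code_dist.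
- apply: opt_from; [exact: code_uniq | by rewrite size_map size_iota | exact: code_dist].
- exact: code_trans.
Qed.
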